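(* Let $\mathcal{A}$ and $\mathcal{B}$ be unital normed algebras (over $\mathbb{R}$ or $\mathbb{C}$), let $\mathcal{M}$ be a normed $(\mathcal{A},\mathcal{B})$-bimodule which is faithful as a left $\mathcal{A}$-module and as a right $\mathcal{B}$-module, and let $\mathcal{T}=Tri(\mathcal{A},\mathcal{M},\mathcal{B})$ be the associated unital triangular normed algebra, with identity $\mathbf{1}$ and center $Z(\mathcal{T})$. Let $n>1$ be an integer, let $\gamma$ be an invertible element of $Z(\mathcal{T})$, and let $\Psi,\Omega:\mathcal{T}\to\mathcal{T}$ be linear mappings with $\Omega(\mathbf{1})\in Z(\mathcal{T})$. Suppose that $\Psi$ and $\Omega$ satisfy one of the following: (i) $\Psi(X^n)=\gamma X^{n-1}\Omega(X)=\gamma\,\Omega(X)X^{n-1}$ for all $X\in\mathcal{T}$; (ii) $\Psi(X^n)=\gamma X\,\Omega(X^{n-1})=\gamma\,\Omega(X^{n-1})X$ for all $X\in\mathcal{T}$. Then $\Psi$ and $\Omega$ are both continuous.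
   Context: The triangular algebra $Tri(\mathcal{A},\mathcal{M},\mathcal{B})$ is the set of matrices $\begin{bmatrix} a & m\\ 0 & b\end{bmatrix}$ with $a\in\mathcal{A}$, $m\in\mathcal{M}$, $b\in\mathcal{B}$, under the usual matrix operations. When $\mathcal{A},\mathcal{B}$ are normed algebras and $\mathcal{M}$ is a normed bimodule, $\mathcal{T}$ is normed by $\left\|\begin{bmatrix} a & m\\ 0 & b\end{bmatrix}\right\|=\|a\|_{\mathcal{A}}+\|m\|_{\mathcal{M}}+\|b\|_{\mathcal{B}}$. Its center is $Z(\mathcal{T})=\{a\oplus b: a\in Z(\mathcal{A}),\ b\in Z(\mathcal{B}),\ am=mb \text{ for all } m\in\mathcal{M}\}$. *)

(* Defs.v *)
From HB Require Import structures.
From mathcomp Require Import all_boot all_order all_algebra.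
From mathcomp Require Import reals.
From mathcomp.real_closed Require Import complex.
Set Implicit Arguments. Unset Strict Implicit. Unset Printing Implicit Defensive.
Import Order.TTheory GRing.Theory Num.Theory.
Local Open Scope ring_scope.

Definition RorC (R : realType) (isC : bool) : numFieldType :=
  if isC then (R[i] : numFieldType) else (R : numFieldType).

Section Defs.
Variable K : numFieldType.

Definition is_norm (V : lmodType K) (nV : V -> K) : Prop :=
  [/\ forall v, 0 <= nV v,
      forall v, nV v = 0 -> v = 0,
      forall v w, nV (v + w) <= nV v + nV w
    & forall (k : K) v, nV (k *: v) = `|k| * nV v].

Definition is_normed_algebra (A : algType K) (nA : A -> K) : Prop :=
  is_norm nA /\ forall a b, nA (a * b) <= nA a * nA b.

Definition is_bimodule (A B : algType K) (M : lmodType K)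
  (lact : A -> M -> M) (ract : M -> B -> M) : Prop :=
  [/\ (forall a a' m, lact (a + a') m = lact a m + lact a' m)
    /\ (forall a m m', lact a (m + m') = lact a m + lact a m')
    /\ (forall (k : K) a m, lact (k *: a) m = k *: lact a m)
    /\ (forall (k : K) a m, lact a (k *: m) = k *: lact a m)
    /\ (forall a a' m, lact (a * a') m = lact a (lact a' m))
    /\ (forall m, lact 1 m = m),
      (forall m b b', ract m (b + b') = ract m b + ract m b')
    /\ (forall m m' b, ract (m + m') b = ract m b + ract m' b)
    /\ (forall (k : K) m b, ract m (k *: b) = k *: ract m b)
    /\ (forall (k : K) m b, ract (k *: m) b = k *: ract m b)
    /\ (forall m b b', ract m (b * b') = ract (ract m b) b')
    /\ (forall m, ract m 1 = m)
    & forall a m b, lact a (ract m b) = ract (lact a m) b].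

Definition faithful_left (A : algType K) (M : lmodType K)
  (lact : A -> M -> M) : Prop :=
  forall a, (forall m, lact a m = 0) -> a = 0.
Definition faithful_right (B : algType K) (M : lmodType K)
  (ract : M -> B -> M) : Prop :=
  forall b, (forall m, ract m b = 0) -> b = 0.

Definition is_normed_bimodule (A B : algType K) (M : lmodType K)
  (lact : A -> M -> M) (ract : M -> B -> M)
  (nA : A -> K) (nB : B -> K) (nM : M -> K) : Prop :=
  [/\ is_norm nM,
      forall a m, nM (lact a m) <= nA a * nM m
    & forall m b, nM (ract m b) <= nM m * nB b].

Section Tri.
Variables (A : algType K) (M : lmodType K) (B : algType K).
Variables (lact : A -> M -> M) (ract : M -> B -> M).

(* The matrix [[a, m], [0, b]] is represented by the triple (a, m, b). *)
Definition tri : Type := (A * M * B)%type.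

Definition tri_mk (a : A) (m : M) (b : B) : tri := (a, m, b).
Definition tri_a (X : tri) : A := X.1.1.
Definition tri_m (X : tri) : M := X.1.2.
Definition tri_b (X : tri) : B := X.2.

Definition tri_zero : tri := tri_mk 0 0 0.
Definition tri_one : tri := tri_mk 1 0 1.
Definition tri_add (X Y : tri) : tri :=
  tri_mk (tri_a X + tri_a Y) (tri_m X + tri_m Y) (tri_b X + tri_b Y).
Definition tri_opp (X : tri) : tri :=
  tri_mk (- tri_a X) (- tri_m X) (- tri_b X).
Definition tri_scale (k : K) (X : tri) : tri :=
  tri_mk (k *: tri_a X) (k *: tri_m X) (k *: tri_b X).
(* matrix product [[a,m],[0,b]] [[a',m'],[0,b']] = [[aa', am'+mb'],[0,bb']] *)
Definition tri_mul (X Y : tri) : tri :=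
  tri_mk (tri_a X * tri_a Y)
         (lact (tri_a X) (tri_m Y) + ract (tri_m X) (tri_b Y))
         (tri_b X * tri_b Y).
Fixpoint tri_exp (X : tri) (n : nat) : tri :=
  match n with
  | 0 => tri_one
  | n'.+1 => tri_mul X (tri_exp X n')
  end.

Definition tri_norm (nA : A -> K) (nM : M -> K) (nB : B -> K) (X : tri) : K :=
  nA (tri_a X) + nM (tri_m X) + nB (tri_b X).

Definition tri_central (Z : tri) : Prop :=
  forall X, tri_mul Z X = tri_mul X Z.

Definition tri_invertible (X : tri) : Prop :=
  exists Y, tri_mul X Y = tri_one /\ tri_mul Y X = tri_one.

Definition tri_linear (F : tri -> tri) : Prop :=
  (forall X Y, F (tri_add X Y) = tri_add (F X) (F Y)) /\
  (forall (k : K) X, F (tri_scale k X) = tri_scale k (F X)).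

Definition tri_continuous (nA : A -> K) (nM : M -> K) (nB : B -> K)
  (F : tri -> tri) : Prop :=
  forall X (eps : K), 0 < eps -> exists2 delta : K, 0 < delta &
    forall Y, tri_norm nA nM nB (tri_add Y (tri_opp X)) < delta ->
      tri_norm nA nM nB (tri_add (F Y) (tri_opp (F X))) < eps.

End Tri.
End Defs.

(* Main.v *)
Require Import Defs.
From HB Require Import structures.
From mathcomp Require Import all_boot all_order all_algebra.
From mathcomp Require Import reals.
From mathcomp.real_closed Require Import complex.
From mathcomp Require Import ring zify.
Set Implicit Arguments. Unset Strict Implicit. Unset Printing Implicit Defensive.
Import Order.TTheory GRing.Theory Num.Theory.
Local Open Scope ring_scope.



Lemma poly_coef0 (K : numFieldType) (V : lmodType K) N (w : nat -> V) :
  (forall t : K, t != 0 -> \sum_(k < N) t ^+ k *: w k = 0) ->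
  forall k, (k < N)%N -> w k = 0.
Proof.
elim: N w => [|N IH] w H k hk; first by [].
have Hs : forall i, (i < N)%N -> w i.+1 = 0.
  pose w' i := ((2:K) ^+ i.+1 - 1) *: w i.+1.
  have H' : forall t : K, t != 0 -> \sum_(i < N) t ^+ i *: w' i = 0.
    move=> t t0.
    have h2 : 2 * t != 0 by rewrite mulf_neq0 // pnatr_eq0.
    have := H _ h2; have := H _ t0.
    rewrite !big_ord_recl /= !expr0 => E1 E2.
    apply: (scalerI t0); rewrite scaler0.
    have -> : t *: \sum_(i < N) t ^+ i *: w' i =
       (\sum_(i < N) (2 * t) ^+ i.+1 *: w i.+1) - \sum_(i < N) t ^+ i.+1 *: w i.+1.
      rewrite scaler_sumr -sumrB; apply: eq_bigr => i _.
      rewrite /w' !scalerA -scalerBl; congr (_ *: _); rewrite exprMn !exprS; ring.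
    rewrite /bump /= in E1 E2.
    move/eqP: E1; rewrite addrC addr_eq0 => /eqP E1.
    move/eqP: E2; rewrite addrC addr_eq0 => /eqP E2.
    have -> : \sum_(i < N) t ^+ i.+1 *: w i.+1 = \sum_(i < N) t ^+ (1 + i) *: w (1 + i)%N by [].
    have -> : \sum_(i < N) (2 * t) ^+ i.+1 *: w i.+1 = \sum_(i < N) (2 * t) ^+ (1 + i) *: w (1 + i)%N by [].
    by rewrite E1 E2 subrr.
  move=> i hi; have := IH w' H' i hi; move/eqP; rewrite scaler_eq0 => /orP [|/eqP //].
  rewrite subr_eq0 => /eqP h; exfalso.
  have : (1 : K) < 2 ^+ i.+1 by rewrite exprn_egt1 // ltr1n.
  by rewrite h ltxx.
case: k hk => [|k] hk; last exact: Hs.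
have := H 1 (oner_neq0 _); rewrite big_ord_recl /= expr0 scale1r.
rewrite big1 ?addr0 // => i _; by rewrite /bump /= Hs ?scaler0.

Qed.

Lemma coef_shift (K : numFieldType) (V : lmodType K) n (p u v : nat -> V) : u n = 0 ->
  (forall t : K, t != 0 -> \sum_(k < n.+1) t ^+ k *: p k =
      \sum_(k < n) t ^+ k *: u k + t *: \sum_(k < n) t ^+ k *: v k) ->
  forall k, (k <= n)%N -> p k = u k + (if k is k'.+1 then v k' else 0).
Proof.
move=> un H k kn.
apply/eqP; rewrite -subr_eq0; apply/eqP.
apply: (@poly_coef0 K V n.+1 (fun k => p k - (u k + if k is k'.+1 then v k' else 0)) _ k kn).
move=> t t0.
under eq_bigr do rewrite scalerBr scalerDr.
rewrite sumrB big_split /= H //.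
rewrite [X in _ - (X + _)]big_ord_recr /= un scaler0 addr0.
rewrite [X in _ - (_ + X)]big_ord_recl /= scaler0 add0r.
have -> : \sum_(i < n) t ^+ bump 0 i *: v (0 + i)%N = t *: \sum_(k0 < n) t ^+ k0 *: v k0.
  by rewrite scaler_sumr; apply: eq_bigr => i _; rewrite scalerA -exprS.
by rewrite subrr.
Qed.



Lemma twoC m : (2 * 'C(m, 2) = m * m.-1)%N.
Proof.
elim: m => [|m IH] //.
rewrite binS bin1 mulnDr IH /=. case: m {IH} => [|m] //=. lia.
Qed.

Lemma nat_e2 N : (0 < N)%N -> (N * N = 2 * 'C(N,2) + N)%N.
Proof. rewrite twoC; case: N => // N _ /=; lia. Qed.

Section S.
Variable K : numFieldType.
Lemma solve_i (V : lmodType K) (N : nat) (P U Q W : V) : (0 < N)%N ->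
  (N.+1)%:R *: P = N%:R *: U + Q ->
  ('C(N.+1,2))%:R *: P = ('C(N,2))%:R *: U + N%:R *: W -> Q = 2%:R *: W - U.
Proof.
move=> N0 E1 E2.
have Nr0 : (N%:R : K) != 0 by rewrite pnatr_eq0 -lt0n.
apply: (scalerI Nr0).
have HQ : Q = N.+1%:R *: P - N%:R *: U by rewrite E1 [N%:R *: U + Q]addrC addrK.
have HW : N%:R *: W = 'C(N.+1,2)%:R *: P - 'C(N,2)%:R *: U by rewrite E2 [_ + N%:R *: W]addrC addrK.
have H2 : N%:R *: (2%:R *: W) = 2%:R *: (N%:R *: W) :> V by rewrite !scalerA mulrC.
rewrite HQ [RHS]scalerBr H2 HW.
rewrite !scalerBr !scalerA -addrA -opprD -scalerDl.
have e1 : (N%:R * N.+1%:R : K) = 2%:R * 'C(N.+1, 2)%:R by rewrite -!natrM twoC /= mulnC.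
have e2 : (N%:R * N%:R : K) = 2%:R * 'C(N, 2)%:R + N%:R.
  by rewrite -!natrM -natrD nat_e2.
by rewrite e1 e2.
Qed.

Lemma solve_ii (V : lmodType K) (N : nat) (P U Q W : V) : (0 < N)%N ->
  (N.+1)%:R *: P = N%:R *: Q + U ->
  ('C(N.+1,2))%:R *: P = ('C(N,2))%:R *: Q + N%:R *: W -> Q = 2%:R *: W - U.
Proof.
move=> N0 E1 E2.
have Nr0 : (N%:R : K) != 0 by rewrite pnatr_eq0 -lt0n.
apply: (scalerI Nr0).
have HU : U = N.+1%:R *: P - N%:R *: Q by rewrite E1 [N%:R *: Q + U]addrC addrK.
have HW : N%:R *: W = 'C(N.+1,2)%:R *: P - 'C(N,2)%:R *: Q by rewrite E2 [_ + N%:R *: W]addrC addrK.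
have H2 : N%:R *: (2%:R *: W) = 2%:R *: (N%:R *: W) :> V by rewrite !scalerA mulrC.
rewrite HU [RHS]scalerBr H2 HW.
have e1 : (N%:R * N.+1%:R : K) = 2%:R * 'C(N.+1, 2)%:R by rewrite -!natrM twoC /= mulnC.
have e2 : (N%:R * N%:R : K) = 2%:R * 'C(N, 2)%:R + N%:R.
  by rewrite -!natrM -natrD nat_e2.
rewrite !scalerBr !scalerA e1 e2 scalerDl.
rewrite opprB addrC addrA addrNK.
by rewrite addrAC subrr add0r.
Qed.
End S.

Section Core.
Variable K : numFieldType.
Variables (A B : algType K) (M : lmodType K).
Variables (lact : A -> M -> M) (ract : M -> B -> M).
Hypothesis hM : is_bimodule lact ract.

Local Notation T := (tri A M B).
Local Notation mul := (tri_mul lact ract).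
Local Notation one := (tri_one A M B).
Local Notation exp := (tri_exp lact ract).

Lemma lactDl a a' m : lact (a + a') m = lact a m + lact a' m.
Proof. by case: hM => [[h _] _ _]. Qed.
Lemma lactDr a m m' : lact a (m + m') = lact a m + lact a m'.
Proof. by case: hM => [[_ [h _]] _ _]. Qed.
Lemma lactZl k a m : lact (k *: a) m = k *: lact a m.
Proof. by case: hM => [[_ [_ [h _]]] _ _]. Qed.
Lemma lactZr k a m : lact a (k *: m) = k *: lact a m.
Proof. by case: hM => [[_ [_ [_ [h _]]]] _ _]. Qed.
Lemma lactM a a' m : lact (a * a') m = lact a (lact a' m).
Proof. by case: hM => [[_ [_ [_ [_ [h _]]]]] _ _]. Qed.
Lemma lact1 m : lact 1 m = m.
Proof. by case: hM => [[_ [_ [_ [_ [_ h]]]]] _ _]. Qed.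
Lemma ractDr m b b' : ract m (b + b') = ract m b + ract m b'.
Proof. by case: hM => [_ [h _] _]. Qed.
Lemma ractDl m m' b : ract (m + m') b = ract m b + ract m' b.
Proof. by case: hM => [_ [_ [h _]] _]. Qed.
Lemma ractZr k m b : ract m (k *: b) = k *: ract m b.
Proof. by case: hM => [_ [_ [_ [h _]]] _]. Qed.
Lemma ractZl k m b : ract (k *: m) b = k *: ract m b.
Proof. by case: hM => [_ [_ [_ [_ [h _]]]] _]. Qed.
Lemma ractM m b b' : ract m (b * b') = ract (ract m b) b'.
Proof. by case: hM => [_ [_ [_ [_ [_ [h _]]]]] _]. Qed.
Lemma ract1 m : ract m 1 = m.
Proof. by case: hM => [_ [_ [_ [_ [_ [_ h]]]]] _]. Qed.
Lemma lact_ract a m b : lact a (ract m b) = ract (lact a m) b.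
Proof. by case: hM => [_ _ h]. Qed.

Lemma lact0r a : lact a 0 = 0.
Proof. by rewrite -[X in lact _ X](scale0r (0 : M)) lactZr scale0r. Qed.
Lemma lact0l m : lact 0 m = 0.
Proof. by rewrite -[X in lact X _](scale0r (0 : A)) lactZl scale0r. Qed.
Lemma ract0l b : ract 0 b = 0.
Proof. by rewrite -[X in ract X _](scale0r (0 : M)) ractZl scale0r. Qed.
Lemma ract0r m : ract m 0 = 0.
Proof. by rewrite -[X in ract _ X](scale0r (0 : B)) ractZr scale0r. Qed.

Lemma triE (X : T) : X = (tri_a X, tri_m X, tri_b X).
Proof. by case: X => [[]]. Qed.
Lemma tri_eqP (X Y : T) : tri_a X = tri_a Y -> tri_m X = tri_m Y -> tri_b X = tri_b Y -> X = Y.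
Proof. by case: X => [[a m] b]; case: Y => [[a' m'] b']; rewrite /tri_a /tri_m /tri_b /= => -> -> ->. Qed.

Lemma tmulDr (Z X Y : T) : mul Z (X + Y) = mul Z X + mul Z Y.
Proof.
apply: tri_eqP; rewrite /tri_mul /tri_mk /tri_a /tri_m /tri_b /=.
- by rewrite mulrDr.
- by rewrite lactDr ractDr addrACA.
- by rewrite mulrDr.
Qed.
Lemma tmulDl (Z X Y : T) : mul (X + Y) Z = mul X Z + mul Y Z.
Proof.
apply: tri_eqP; rewrite /tri_mul /tri_mk /tri_a /tri_m /tri_b /=.
- by rewrite mulrDl.
- by rewrite lactDl ractDl addrACA.
- by rewrite mulrDl.
Qed.
Lemma tmulZr k (Z X : T) : mul Z (k *: X) = k *: mul Z X.
Proof.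
apply: tri_eqP; rewrite /tri_mul /tri_mk /tri_a /tri_m /tri_b /=.
- by rewrite scalerAr.
- by rewrite lactZr ractZr scalerDr.
- by rewrite scalerAr.
Qed.
Lemma tmulZl k (Z X : T) : mul (k *: X) Z = k *: mul X Z.
Proof.
apply: tri_eqP; rewrite /tri_mul /tri_mk /tri_a /tri_m /tri_b /=.
- by rewrite scalerAl.
- by rewrite lactZl ractZl scalerDr.
- by rewrite scalerAl.
Qed.
Lemma tmulr0 (Z : T) : mul Z 0 = 0.
Proof. by rewrite -[X in mul _ X](scale0r (0 : T)) tmulZr scale0r. Qed.
Lemma tmul0r (Z : T) : mul 0 Z = 0.
Proof. by rewrite -[X in mul X _](scale0r (0 : T)) tmulZl scale0r. Qed.
Lemma tmulNr (Z X : T) : mul (- X) Z = - mul X Z.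
Proof. by rewrite -scaleN1r tmulZl scaleN1r. Qed.
Lemma tmulrN (Z X : T) : mul Z (- X) = - mul Z X.
Proof. by rewrite -scaleN1r tmulZr scaleN1r. Qed.
Lemma tmulBr (Z X Y : T) : mul Z (X - Y) = mul Z X - mul Z Y.
Proof. by rewrite tmulDr tmulrN. Qed.
Lemma tmulBl (Z X Y : T) : mul (X - Y) Z = mul X Z - mul Y Z.
Proof. by rewrite tmulDl tmulNr. Qed.
Lemma tmul1r (X : T) : mul one X = X.
Proof.
apply: tri_eqP; rewrite /tri_mul /tri_mk /tri_a /tri_m /tri_b /=.
- by rewrite mul1r.
- by rewrite lact1 ract0l addr0.
- by rewrite mul1r.
Qed.
Lemma tmulr1 (X : T) : mul X one = X.
Proof.
apply: tri_eqP; rewrite /tri_mul /tri_mk /tri_a /tri_m /tri_b /=.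
- by rewrite mulr1.
- by rewrite lact0r ract1 add0r.
- by rewrite mulr1.
Qed.
Lemma tmulA (X Y Z : T) : mul X (mul Y Z) = mul (mul X Y) Z.
Proof.
apply: tri_eqP; rewrite /tri_mul /tri_mk /tri_a /tri_m /tri_b /=.
- by rewrite mulrA.
- by rewrite lactDr ractDl lactM lact_ract ractM addrA.
- by rewrite mulrA.
Qed.
Lemma tmul_sumr (Z : T) N (F : 'I_N -> T) :
  mul Z (\sum_(i < N) F i) = \sum_(i < N) mul Z (F i).
Proof.
elim: N F => [|N IH] F; first by rewrite !big_ord0 tmulr0.
by rewrite !big_ord_recr /= tmulDr IH.
Qed.
Lemma tmul_suml (Z : T) N (F : 'I_N -> T) :
  mul (\sum_(i < N) F i) Z = \sum_(i < N) mul (F i) Z.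
Proof.
elim: N F => [|N IH] F; first by rewrite !big_ord0 tmul0r.
by rewrite !big_ord_recr /= tmulDl IH.
Qed.
Lemma texpSr (X : T) k : exp X k.+1 = mul (exp X k) X.
Proof.
elim: k => [|k IH] /=; first by rewrite tmulr1 tmul1r.
have E : mul X (exp X k) = mul (exp X k) X by exact: IH.
by rewrite E tmulA -E.
Qed.

Lemma bump0S i : bump 0 i = i.+1. Proof. by []. Qed.

Lemma texp_binom (X : T) (t : K) j :
  exp (one + t *: X) j = \sum_(k < j.+1) (t ^+ k * 'C(j, k)%:R) *: exp X k.
Proof.
elim: j => [|j IH].
  by rewrite big_ord_recl big_ord0 expr0 mul1r mulr1n scale1r addr0.
rewrite [LHS]/= -/(exp _ j) IH tmulDl tmul1r tmulZl tmul_sumr.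
symmetry; rewrite big_ord_recl expr0 mul1r bin0 mulr1n scale1r.
under eq_bigr => i _ do rewrite lift0 binS natrD mulrDr scalerDl.
rewrite big_split /=.
rewrite [X in _ = X + _]big_ord_recl expr0 mul1r bin0 mulr1n scale1r -addrA; congr (_ + _).
rewrite [X in X + _ = _]big_ord_recr /= bin_small // mulr0 scale0r addr0.
congr (_ + _).
rewrite scaler_sumr; apply: eq_bigr => i _.
by rewrite tmulZr scalerA exprS mulrA.
Qed.

Section Lin.
Variable F : T -> T.
Hypothesis hF : tri_linear F.
Lemma linD X Y : F (X + Y) = F X + F Y. Proof. exact: hF.1. Qed.
Lemma linZ k X : F (k *: X) = k *: F X. Proof. exact: hF.2. Qed.
Lemma lin0 : F 0 = 0.
Proof. by rewrite -[X in F X](scale0r (0 : T)) linZ scale0r. Qed.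
Lemma linN X : F (- X) = - F X.
Proof. by rewrite -scaleN1r linZ scaleN1r. Qed.
Lemma linB X Y : F (X - Y) = F X - F Y.
Proof. by rewrite linD linN. Qed.
Lemma lin_sum N (G : 'I_N -> T) : F (\sum_(i < N) G i) = \sum_(i < N) F (G i).
Proof.
elim: N G => [|N IH] G; first by rewrite !big_ord0 lin0.
by rewrite !big_ord_recr /= linD IH.
Qed.
Lemma lin_binom Y t N : F (exp (one + t *: Y) N) =
  \sum_(k < N.+1) t ^+ k *: ('C(N, k)%:R *: F (exp Y k)).
Proof.
rewrite texp_binom lin_sum; apply: eq_bigr => i _.
by rewrite linZ scalerA.
Qed.
End Lin.

Lemma lin_mulr Z0 : tri_linear (fun Z => mul Z0 Z).
Proof. split => [X Y|k X]; [exact: tmulDr | exact: tmulZr]. Qed.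
Lemma lin_mull Z0 : tri_linear (fun Z => mul Z Z0).
Proof. split => [X Y|k X]; [exact: tmulDl | exact: tmulZl]. Qed.
Lemma lin_comp (F G : T -> T) : tri_linear F -> tri_linear G ->
  tri_linear (fun Z => F (G Z)).
Proof.
move=> hF hG; split => [X Y|k X].
- by rewrite (linD hG) (linD hF).
- by rewrite (linZ hG) (linZ hF).
Qed.

Lemma coefs_gen (Psi P1 P2 : T -> T) N Y :
  tri_linear Psi -> tri_linear P1 -> tri_linear P2 ->
  (0 < N)%N ->
  (forall t : K, Psi (exp (one + t *: Y) N.+1) =
     P1 (exp (one + t *: Y) N) + t *: P2 (exp (one + t *: Y) N)) ->
  N.+1%:R *: Psi Y = N%:R *: P1 Y + P2 one /\
  'C(N.+1, 2)%:R *: Psi (mul Y Y) = 'C(N, 2)%:R *: P1 (mul Y Y) + N%:R *: P2 Y.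
Proof.
move=> hP h1 h2 N0 H.
have Hu : 'C(N, N.+1)%:R *: P1 (exp Y N.+1) = 0 by rewrite bin_small // scale0r.
have Hp : forall t : K, t != 0 ->
  \sum_(k < N.+2) t ^+ k *: ('C(N.+1, k)%:R *: Psi (exp Y k)) =
  \sum_(k < N.+1) t ^+ k *: ('C(N, k)%:R *: P1 (exp Y k)) +
  t *: \sum_(k < N.+1) t ^+ k *: ('C(N, k)%:R *: P2 (exp Y k)).
  by move=> t _; rewrite -(lin_binom hP) H (lin_binom h1) (lin_binom h2).
have C := @coef_shift K T N.+1 (fun k => 'C(N.+1, k)%:R *: Psi (exp Y k))
  (fun k => 'C(N, k)%:R *: P1 (exp Y k)) (fun k => 'C(N, k)%:R *: P2 (exp Y k)) Hu Hp.
split.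
- by have := C 1%N isT; rewrite /= !tmulr1 !bin1 bin0 scale1r.
- by have := C 2%N N0; rewrite /= !tmulr1 bin1.
Qed.

Lemma triaZ k (Z : T) : tri_a (k *: Z) = k *: tri_a Z. Proof. by []. Qed.
Lemma trimZ k (Z : T) : tri_m (k *: Z) = k *: tri_m Z. Proof. by []. Qed.
Lemma tribZ k (Z : T) : tri_b (k *: Z) = k *: tri_b Z. Proof. by []. Qed.
Lemma triaD (Z W : T) : tri_a (Z + W) = tri_a Z + tri_a W. Proof. by []. Qed.
Lemma trimD (Z W : T) : tri_m (Z + W) = tri_m Z + tri_m W. Proof. by []. Qed.
Lemma tribD (Z W : T) : tri_b (Z + W) = tri_b Z + tri_b W. Proof. by []. Qed.
Lemma tria0 : tri_a (0 : T) = 0. Proof. by []. Qed.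
Lemma trim0 : tri_m (0 : T) = 0. Proof. by []. Qed.
Lemma trib0 : tri_b (0 : T) = 0. Proof. by []. Qed.
Lemma triaM (Z W : T) : tri_a (mul Z W) = tri_a Z * tri_a W. Proof. by []. Qed.
Lemma trimM (Z W : T) : tri_m (mul Z W) = lact (tri_a Z) (tri_m W) + ract (tri_m Z) (tri_b W).
Proof. by []. Qed.
Lemma tribM (Z W : T) : tri_b (mul Z W) = tri_b Z * tri_b W. Proof. by []. Qed.
Lemma tria3 a m b : tri_a ((a, m, b) : T) = a. Proof. by []. Qed.
Lemma trim3 a m b : tri_m ((a, m, b) : T) = m. Proof. by []. Qed.
Lemma trib3 a m b : tri_b ((a, m, b) : T) = b. Proof. by []. Qed.

Definition triCE := (triaZ, trimZ, tribZ, triaD, trimD, tribD, tria0, trim0, trib0,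
  triaM, trimM, tribM, tria3, trim3, trib3).

Lemma twice0 (V : lmodType K) (x : V) : x = 2%:R *: x -> x = 0.
Proof.
move=> h; have : x + x = x + 0 by rewrite addr0 -mulr2n -scaler_nat -h.
exact: addrI.
Qed.

Lemma D_zero (D : T -> T) : tri_linear D ->
  (forall Y, D (mul Y Y) = 2%:R *: mul Y (D Y)) ->
  (forall Y, D (mul Y Y) = 2%:R *: mul (D Y) Y) ->
  faithful_left lact -> faithful_right ract -> forall X, D X = 0.
Proof.
move=> hD Da Db hfl hfr.
have two0 : (2%:R : K) != 0 by rewrite pnatr_eq0.
have sqD : forall X E : T, mul (X + E) (X + E) = mul X X + (mul X E + mul E X) + mul E E.
  by move=> X E; rewrite tmulDl !tmulDr !addrA.
have LA : forall X E, D (mul X E + mul E X) = 2%:R *: (mul X (D E) + mul E (D X)).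
  move=> X E; have h := Da (X + E).
  rewrite sqD !(linD hD) (Da X) (Da E) tmulDl !tmulDr in h.
  rewrite (linD hD).
  have h' : 2%:R *: mul X (D X) + (D (mul X E) + D (mul E X)) + 2%:R *: mul E (D E) =
     2%:R *: mul X (D X) + 2%:R *: (mul X (D E) + mul E (D X)) + 2%:R *: mul E (D E).
    by rewrite h !scalerDr !addrA.
  by move/addIr/addrI: h'.
have LB : forall X E, D (mul X E + mul E X) = 2%:R *: (mul (D X) E + mul (D E) X).
  move=> X E; have h := Db (X + E).
  rewrite sqD !(linD hD) (Db X) (Db E) tmulDl !tmulDr in h.
  rewrite (linD hD).
  have h' : 2%:R *: mul (D X) X + (D (mul X E) + D (mul E X)) + 2%:R *: mul (D E) E =
     2%:R *: mul (D X) X + 2%:R *: (mul (D X) E + mul (D E) X) + 2%:R *: mul (D E) E.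
    by rewrite h !scalerDr !addrA.
  by move/addIr/addrI: h'.
pose e : T := (1, 0, 0).
have ee : mul e e = e.
  by apply: tri_eqP; rewrite !triCE ?mulr1 ?lact0r ?ract0l ?addr0 ?mulr0.
have De : D e = 0.
  have h := Da e; rewrite ee in h.
  apply: tri_eqP; rewrite !triCE.
  - by apply: twice0; have := congr1 (fun Z : T => tri_a Z) h; rewrite !triCE mul1r.
  - by apply: twice0; have := congr1 (fun Z : T => tri_m Z) h; rewrite !triCE lact1 ract0l addr0.
  - by have := congr1 (fun Z : T => tri_b Z) h; rewrite !triCE mul0r scaler0.
have comm : forall Y, mul Y (D Y) = mul (D Y) Y.
  by move=> Y; apply: (scalerI two0); rewrite -Da -Db.
have eD : forall X, mul e (D X) = mul (D X) e.
  move=> X; apply: (scalerI two0).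
  have := LA X e; rewrite LB De tmulr0 tmul0r add0r addr0 => ->. done.
have Dm : forall X, tri_m (D X) = 0.
  move=> X; have := congr1 (fun Z : T => tri_m Z) (eD X).
  by rewrite !triCE lact1 ract0l addr0 lact0r ract0r addr0.
have DXm : forall m : M, D (0, m, 0) = 0.
  move=> m.
  have E1 : mul (0, m, 0) e + mul e (0, m, 0) = (0, m, 0) :> T.
    by apply: tri_eqP; rewrite !triCE ?mulr0 ?mul0r ?mul1r ?lact0r ?lact0l ?lact1 ?ract0r ?ract0l ?addr0 ?add0r.
  have h := LA (0, m, 0) e; rewrite E1 De tmulr0 add0r in h.
  apply: tri_eqP; rewrite !triCE ?Dm //.
  - by apply: twice0; have := congr1 (fun Z : T => tri_a Z) h; rewrite !triCE mul1r.
  - by have := congr1 (fun Z : T => tri_b Z) h; rewrite !triCE mul0r scaler0.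
have DXa_b : forall a : A, tri_b (D (a, 0, 0)) = 0.
  move=> a.
  have E1 : mul (a, 0, 0) e + mul e (a, 0, 0) = 2%:R *: (a, 0, 0) :> T.
    apply: tri_eqP; rewrite !triCE ?mulr0 ?mul0r ?mul1r ?mulr1 ?lact0r ?lact0l ?lact1 ?ract0r ?ract0l ?addr0 ?add0r ?scaler0 //.
    by rewrite scaler_nat mulr2n.
  have h := LA (a, 0, 0) e; rewrite E1 De tmulr0 add0r (linZ hD) in h.
  have h2 := scalerI two0 h.
  by have := congr1 (fun Z : T => tri_b Z) h2; rewrite !triCE mul0r.
have DXb_a : forall b : B, tri_a (D (0, 0, b)) = 0.
  move=> b.
  have E1 : mul (0, 0, b) e + mul e (0, 0, b) = 0 :> T.
    by apply: tri_eqP; rewrite !triCE ?mulr0 ?mul0r ?mul1r ?mulr1 ?lact0r ?lact0l ?lact1 ?ract0r ?ract0l ?addr0 ?add0r ?scaler0.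
  have h := LA (0, 0, b) e; rewrite E1 De tmulr0 add0r (lin0 hD) in h.
  have := congr1 (fun Z : T => tri_a Z) h; rewrite !triCE mul1r => /esym /eqP.
  by rewrite scaler_eq0 (negbTE two0) /= => /eqP.
have DXa : forall a : A, D (a, 0, 0) = 0.
  move=> a.
  suff ha : tri_a (D (a, 0, 0)) = 0.
    by apply: tri_eqP; rewrite !triCE ?Dm ?DXa_b.
  apply: hfl => m.
  have EY : ((a, m, 0) : T) = (a, 0, 0) + (0, m, 0) by apply: tri_eqP; rewrite !triCE ?addr0 ?add0r.
  have := congr1 (fun Z : T => tri_m Z) (comm (a, m, 0)).
  rewrite EY (linD hD) DXm addr0 !triCE Dm DXa_b lact0r ract0r addr0 ract0l addr0 add0r.
  by move=> <-.
have DXb : forall b : B, D (0, 0, b) = 0.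
  move=> b.
  suff hb : tri_b (D (0, 0, b)) = 0.
    by apply: tri_eqP; rewrite !triCE ?Dm ?DXb_a.
  apply: hfr => m.
  have EY : ((0, m, b) : T) = (0, m, 0) + (0, 0, b) by apply: tri_eqP; rewrite !triCE ?addr0 ?add0r.
  have := congr1 (fun Z : T => tri_m Z) (comm (0, m, b)).
  rewrite EY (linD hD) DXm add0r !triCE Dm DXb_a lact0r lact0l ract0l !add0r ?addr0.
  by move=> ->.
move=> X.
have EX : X = (tri_a X, 0, 0) + (0, tri_m X, 0) + (0, 0, tri_b X).
  by apply: tri_eqP; rewrite !triCE ?addr0 ?add0r.
by rewrite EX !(linD hD) DXa DXm DXb !addr0.
Qed.

Lemma omega_form (Om : T -> T) : tri_linear Om -> tri_central lact ract (Om one) ->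
  (forall Y, Om (mul Y Y) = 2%:R *: mul Y (Om Y) - mul (mul Y Y) (Om one)) ->
  (forall Y, Om (mul Y Y) = 2%:R *: mul (Om Y) Y - mul (mul Y Y) (Om one)) ->
  faithful_left lact -> faithful_right ract -> forall X, Om X = mul (Om one) X.
Proof.
move=> hO hc Ha Hb hfl hfr.
set c := Om one in hc Ha Hb *.
have cYY : forall Y, mul Y (mul c Y) = mul c (mul Y Y).
  by move=> Y; rewrite tmulA -hc tmulA.
have cYY' : forall Y, mul (mul c Y) Y = mul c (mul Y Y).
  by move=> Y; rewrite -tmulA.
have hD : tri_linear (fun X => Om X - mul c X).
  split => [X Y|k X].
  - by rewrite (linD hO) tmulDr opprD addrACA.
  - change (Om (k *: X) - mul c (k *: X) = k *: (Om X - mul c X)).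
    by rewrite (linZ hO) tmulZr scalerBr.
have two2 : forall v : T, 2%:R *: v = v + v by move=> v; rewrite scaler_nat mulr2n.
have := @D_zero (fun X => Om X - mul c X) hD _ _ hfl hfr.
move=> H X; apply/eqP; rewrite -subr_eq0; apply/eqP; apply: H => Y.
- rewrite Ha tmulBr cYY -hc scalerBr two2 [_ *: mul c _]two2 opprD addrA. done.
- rewrite Hb tmulBl cYY' -hc scalerBr two2 [_ *: mul c _]two2 opprD addrA. done.
Qed.

Lemma tri_norm_ge0 (nA : A -> K) (nM : M -> K) (nB : B -> K) :
  is_normed_algebra nA -> is_normed_algebra nB ->
  is_normed_bimodule lact ract nA nB nM -> forall Z : T, 0 <= tri_norm nA nM nB Z.
Proof.
move=> [[nA0 _ _ _] _] [[nB0 _ _ _] _] [[nM0 _ _ _] _ _] Z.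
by rewrite /tri_norm !addr_ge0.
Qed.

Lemma tri_norm_mul (nA : A -> K) (nM : M -> K) (nB : B -> K) :
  is_normed_algebra nA -> is_normed_algebra nB ->
  is_normed_bimodule lact ract nA nB nM -> forall Z W : T,
  tri_norm nA nM nB (mul Z W) <= tri_norm nA nM nB Z * tri_norm nA nM nB W.
Proof.
move=> [[nA0 _ _ _] nAM] [[nB0 _ _ _] nBM] [[nM0 _ nMD _] nMl nMr] Z W.
rewrite /tri_norm !triCE.
apply: (@le_trans _ _ (nA (tri_a Z) * nA (tri_a W) + (nA (tri_a Z) * nM (tri_m W)
   + nM (tri_m Z) * nB (tri_b W)) + nB (tri_b Z) * nB (tri_b W))).
  apply: lerD; [apply: lerD|].
  - exact: nAM.
  - apply: le_trans (nMD _ _) _; apply: lerD; [exact: nMl | exact: nMr].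
  - exact: nBM.
rewrite -subr_ge0.
set za := nA _; set zm := nM _; set zb := nB _.
set wa := nA _; set wm := nM _; set wb := nB _.
have -> : (za + zm + zb) * (wa + wm + wb) - (za * wa + (za * wm + zm * wb) + zb * wb)
  = za * wb + zm * wa + zm * wm + zb * wa + zb * wm by ring.
by rewrite !addr_ge0 // mulr_ge0 // ?nA0 ?nB0 ?nM0.
Qed.

Lemma cont_left (nA : A -> K) (nM : M -> K) (nB : B -> K) :
  is_normed_algebra nA -> is_normed_algebra nB ->
  is_normed_bimodule lact ract nA nB nM -> forall (Z : T) (F : T -> T),
  (forall X, F X = mul Z X) -> tri_continuous nA nM nB F.
Proof.
move=> hA hB hMn Z F hF X eps eps0.
set z := tri_norm nA nM nB Z.
have z0 : 0 <= z by apply: tri_norm_ge0.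
have z1 : 0 < z + 1 by apply: (lt_le_trans ltr01); rewrite addrC lerDl.
exists (eps / (z + 1)); first by rewrite divr_gt0.
move=> Y hY.
change (is_true (tri_norm nA nM nB (Y - X) < eps / (z + 1))) in hY.
change (is_true (tri_norm nA nM nB (F Y - F X) < eps)).
rewrite !hF -tmulBr.
apply: le_lt_trans (tri_norm_mul hA hB hMn _ _) _.
set w := tri_norm nA nM nB (Y - X) in hY *.
have w0 : 0 <= w by apply: tri_norm_ge0.
apply: (@le_lt_trans _ _ ((z + 1) * w)).
  by apply: ler_wpM2r => //; rewrite lerDl.
rewrite -(ltr_pM2l z1) in hY.
by rewrite [(z + 1) * (eps / _)]mulrC divfK ?gt_eqF // in hY.
Qed.
End Core.

Unset Implicit Arguments.
Set Strict Implicit.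

Theorem corollary2p3 (R : realType) (isC : bool)
  (A B : algType (RorC R isC)) (M : lmodType (RorC R isC))
  (lact : A -> M -> M) (ract : M -> B -> M)
  (nA : A -> RorC R isC) (nB : B -> RorC R isC) (nM : M -> RorC R isC)
  (hA : is_normed_algebra nA) (hB : is_normed_algebra nB)
  (hM : is_bimodule lact ract)
  (hMn : is_normed_bimodule lact ract nA nB nM)
  (hfl : faithful_left lact) (hfr : faithful_right ract)
  (n : nat) (hn : (1 < n)%N)
  (gamma : tri A M B) (hgZ : tri_central lact ract gamma)
  (hginv : tri_invertible lact ract gamma)
  (Psi Omega : tri A M B -> tri A M B)
  (hPsi : tri_linear Psi) (hOmega : tri_linear Omega)
  (hO1 : tri_central lact ract (Omega (tri_one A M B))) :
  ((forall X : tri A M B,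
       Psi (tri_exp lact ract X n)
         = tri_mul lact ract gamma
             (tri_mul lact ract (tri_exp lact ract X n.-1) (Omega X))
    /\ Psi (tri_exp lact ract X n)
         = tri_mul lact ract gamma
             (tri_mul lact ract (Omega X) (tri_exp lact ract X n.-1)))
   \/
   (forall X : tri A M B,
       Psi (tri_exp lact ract X n)
         = tri_mul lact ract gamma
             (tri_mul lact ract X (Omega (tri_exp lact ract X n.-1)))
    /\ Psi (tri_exp lact ract X n)
         = tri_mul lact ract gamma
             (tri_mul lact ract (Omega (tri_exp lact ract X n.-1)) X))) ->
  tri_continuous nA nM nB Psi /\ tri_continuous nA nM nB Omega.
Proof.
move=> Hcases.
set c := Omega (tri_one A M B) in hO1 *.
case: hginv => g [gg1 gg2].
have cancel_g : forall Z, tri_mul lact ract g (tri_mul lact ract gamma Z) = Z by move=> Z; rewrite (tmulA hM) gg2 (tmul1r hM).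
case: n hn Hcases => [|N] // hN Hcases.
have N0 : (0 < N)%N by [].
have NS0 : (N.+1%:R : RorC R isC) != 0 by rewrite pnatr_eq0.
have gcancel : forall Z W, tri_mul lact ract gamma Z = tri_mul lact ract gamma W -> Z = W.
  by move=> Z W e; rewrite -(cancel_g Z) e cancel_g.
have key : (forall Y, Omega (tri_mul lact ract (Y) (Y)) = 2%:R *: tri_mul lact ract (Y) (Omega Y) - tri_mul lact ract (tri_mul lact ract (Y) (Y)) (c))
  /\ (forall Y, Omega (tri_mul lact ract (Y) (Y)) = 2%:R *: tri_mul lact ract (Omega Y) (Y) - tri_mul lact ract (tri_mul lact ract (Y) (Y)) (c))
  /\ ((forall Y, Omega Y = tri_mul lact ract (c) (Y)) -> forall Y, Psi Y = tri_mul lact ract (tri_mul lact ract (gamma) (c)) (Y)).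
  case: Hcases => H.
  - have CA : forall Y, N.+1%:R *: Psi Y = N%:R *: tri_mul lact ract (gamma) (tri_mul lact ract (Y) (c)) + tri_mul lact ract (gamma) (tri_mul lact ract (tri_one A M B) (Omega Y)) /\
        'C(N.+1,2)%:R *: Psi (tri_mul lact ract (Y) (Y)) = 'C(N,2)%:R *: tri_mul lact ract (gamma) (tri_mul lact ract (tri_mul lact ract (Y) (Y)) (c)) + N%:R *: tri_mul lact ract (gamma) (tri_mul lact ract (Y) (Omega Y)).
      move=> Y; apply: (@coefs_gen _ _ _ _ _ _ hM Psi (fun Z => tri_mul lact ract (gamma) (tri_mul lact ract (Z) (c))) (fun Z => tri_mul lact ract (gamma) (tri_mul lact ract (Z) (Omega Y)))) => //.
      + exact: lin_comp (lin_mulr hM gamma) (lin_mull hM c).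
      + exact: lin_comp (lin_mulr hM gamma) (lin_mull hM (Omega Y)).
      + by move=> t; rewrite (H _).1 /= (linD hOmega) (linZ hOmega) !(tmulDr hM) !(tmulZr hM).
    have CB : forall Y, N.+1%:R *: Psi Y = N%:R *: tri_mul lact ract (gamma) (tri_mul lact ract (c) (Y)) + tri_mul lact ract (gamma) (tri_mul lact ract (Omega Y) (tri_one A M B)) /\
        'C(N.+1,2)%:R *: Psi (tri_mul lact ract (Y) (Y)) = 'C(N,2)%:R *: tri_mul lact ract (gamma) (tri_mul lact ract (c) (tri_mul lact ract (Y) (Y))) + N%:R *: tri_mul lact ract (gamma) (tri_mul lact ract (Omega Y) (Y)).
      move=> Y; apply: (@coefs_gen _ _ _ _ _ _ hM Psi (fun Z => tri_mul lact ract (gamma) (tri_mul lact ract (c) (Z))) (fun Z => tri_mul lact ract (gamma) (tri_mul lact ract (Omega Y) (Z)))) => //.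
      + exact: lin_comp (lin_mulr hM gamma) (lin_mulr hM c).
      + exact: lin_comp (lin_mulr hM gamma) (lin_mulr hM (Omega Y)).
      + by move=> t; rewrite (H _).2 /= (linD hOmega) (linZ hOmega) !(tmulDl hM) !(tmulZl hM) !(tmulDr hM) !(tmulZr hM).
    split; [|split].
    + move=> Y; have [E1 _] := CA (tri_mul lact ract (Y) (Y)); have [_ E2] := CA Y.
      rewrite (tmul1r hM) in E1.
      move: (solve_i N0 E1 E2) => Q; apply: gcancel; by rewrite Q (tmulBr hM) (tmulZr hM).
    + move=> Y; have [E1 _] := CB (tri_mul lact ract (Y) (Y)); have [_ E2] := CB Y.
      rewrite (tmulr1 hM) in E1.
      move: (solve_i N0 E1 E2) => Q; apply: gcancel; by rewrite Q (tmulBr hM) (tmulZr hM) -hO1.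
    + move=> HO Y; have [E1 _] := CA Y.
      rewrite (tmul1r hM) HO -hO1 in E1.
      apply: (scalerI NS0); by rewrite E1 -(tmulA hM) -natr1 scalerDl scale1r.
  - have CA : forall Y, N.+1%:R *: Psi Y = N%:R *: tri_mul lact ract (gamma) (Omega Y) + tri_mul lact ract (gamma) (tri_mul lact ract (Y) (Omega (tri_one A M B))) /\
        'C(N.+1,2)%:R *: Psi (tri_mul lact ract (Y) (Y)) = 'C(N,2)%:R *: tri_mul lact ract (gamma) (Omega (tri_mul lact ract (Y) (Y))) + N%:R *: tri_mul lact ract (gamma) (tri_mul lact ract (Y) (Omega Y)).
      move=> Y; apply: (@coefs_gen _ _ _ _ _ _ hM Psi (fun Z => tri_mul lact ract (gamma) (Omega Z)) (fun Z => tri_mul lact ract (gamma) (tri_mul lact ract (Y) (Omega Z)))) => //.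
      + exact: lin_comp (lin_mulr hM gamma) hOmega.
      + exact: lin_comp (lin_mulr hM gamma) (lin_comp (lin_mulr hM Y) hOmega).
      + by move=> t; rewrite (H _).1 /= !(tmulDl hM) (tmul1r hM) !(tmulZl hM) !(tmulDr hM) !(tmulZr hM).
    have CB : forall Y, N.+1%:R *: Psi Y = N%:R *: tri_mul lact ract (gamma) (Omega Y) + tri_mul lact ract (gamma) (tri_mul lact ract (Omega (tri_one A M B)) (Y)) /\
        'C(N.+1,2)%:R *: Psi (tri_mul lact ract (Y) (Y)) = 'C(N,2)%:R *: tri_mul lact ract (gamma) (Omega (tri_mul lact ract (Y) (Y))) + N%:R *: tri_mul lact ract (gamma) (tri_mul lact ract (Omega Y) (Y)).
      move=> Y; apply: (@coefs_gen _ _ _ _ _ _ hM Psi (fun Z => tri_mul lact ract (gamma) (Omega Z)) (fun Z => tri_mul lact ract (gamma) (tri_mul lact ract (Omega Z) (Y)))) => //.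
      + exact: lin_comp (lin_mulr hM gamma) hOmega.
      + exact: lin_comp (lin_mulr hM gamma) (lin_comp (lin_mull hM Y) hOmega).
      + by move=> t; rewrite (H _).2 /= !(tmulDr hM) (tmulr1 hM) !(tmulZr hM).
    split; [|split].
    + move=> Y; have [E1 _] := CA (tri_mul lact ract (Y) (Y)); have [_ E2] := CA Y.
      move: (solve_ii N0 E1 E2) => Q; apply: gcancel; by rewrite Q (tmulBr hM) (tmulZr hM).
    + move=> Y; have [E1 _] := CB (tri_mul lact ract (Y) (Y)); have [_ E2] := CB Y.
      move: (solve_ii N0 E1 E2) => Q; apply: gcancel; by rewrite Q (tmulBr hM) (tmulZr hM) -hO1.
    + move=> HO Y; have [E1 _] := CA Y.
      rewrite HO -hO1 in E1.
      apply: (scalerI NS0); by rewrite E1 -(tmulA hM) -natr1 scalerDl scale1r.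
case: key => F1 [F2 K1].
have HO := omega_form hM hOmega hO1 F1 F2 hfl hfr.
split; [exact: (cont_left hM hA hB hMn (K1 HO)) | exact: (cont_left hM hA hB hMn HO)].
Qed.
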